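(* Let $d\ge 3$ be odd, $n=\frac{d^2+1}{2}$, and consider the $[[d^2+1,2,d]]$ generalized bicycle code defined by $a(x)=1+x$, $b(x)=1+x^d$. If all syndrome extractions are performed using the RL pattern, the effective distance of the code is $d$.
   Context: $R_n=\mathbb{F}_2[x]/\langle x^n-1\rangle$, vectors of $\mathbb{F}_2^{2n}$ are pairs $(u,v)$ of elements of $R_n$ (left half, right half), weight = number of nonzero coefficients. Code spaces: $C_2=\{(c(1+x),c(1+x^d))\}$ (X-stabilizers), $C_1=\{(u,v):u(1+x^d)+v(1+x)=0\}$, $C_2'=\{(c(1+x^{-d}),c(1+x^{-1}))\}$ (Z-stabilizers), $C_1'=\{(u,v):u(1+x^{-1})+v(1+x^{-d})=0\}$, $x^{-1}=x^{n-1}$; undetectable X- (resp. Z-) logical errors are elements of $C_1\setminus C_2$ (resp. $C_1'\setminus C_2'$). Each check $x^i(1+x,1+x^d)$ (left qubits $i,i+1$; right qubits $i,i+d$) and $x^i(1+x^{-d},1+x^{-1})$ is measured with one ancilla via four CNOTs. In the RL pattern the ancilla first interacts with the check's two right-half qubits and then with its two left-half qubits, so a single ancilla fault between the two halves propagates to errors of the check's type on its two left-half qubits, i.e. $(x^i(1+x),0)$ for X-checks and $(x^i(1+x^{-d}),0)$ for Z-checks; any other single ancilla fault is equivalent to at most one data-qubit error. The effective distance is the minimum number of faults producing an undetectable logical error, namely the minimum of $\mathrm{wt}(j)+\mathrm{wt}(u)+\mathrm{wt}(v)$ over $j,u,v\in R_n$ with $(u+j(x)(1+x),v)\in C_1\setminus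 C_2$ or $(u+j(x)(1+x^{-d}),v)\in C_1'\setminus C_2'$. *)

(* Defs.v *)
(* R_n = F_2[x]/<x^n - 1> is represented by polynomials in
   {poly 'F_2}; two polynomials denote the same element of R_n iff
   x^n - 1 divides their difference. *)
From HB Require Import structures.
From mathcomp Require Import all_boot all_order all_algebra.
Set Implicit Arguments. Unset Strict Implicit. Unset Printing Implicit Defensive.
Import GRing.Theory.
Local Open Scope ring_scope.

Definition modpoly (n : nat) : {poly 'F_2} := 'X^n - 1.

Definition eqR (n : nat) (p q : {poly 'F_2}) : Prop := dvdp (modpoly n) (p - q).

Definition wt (n : nat) (p : {poly 'F_2}) : nat :=
  count (fun c : 'F_2 => c != 0) (polyseq (p %% modpoly n)).

(* x^{-k} in R_n, i.e. x^{(n-1)k}  (x^{-1} = x^{n-1}) *)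
Definition xneg (n k : nat) : {poly 'F_2} := 'X^(n.-1 * k).

Definition inC1 (n d : nat) (u v : {poly 'F_2}) : Prop :=
  eqR n (u * (1 + 'X^d) + v * (1 + 'X)) 0.
Definition inC2 (n d : nat) (u v : {poly 'F_2}) : Prop :=
  exists c : {poly 'F_2}, eqR n u (c * (1 + 'X)) /\ eqR n v (c * (1 + 'X^d)).
Definition inC1' (n d : nat) (u v : {poly 'F_2}) : Prop :=
  eqR n (u * (1 + xneg n 1) + v * (1 + xneg n d)) 0.
Definition inC2' (n d : nat) (u v : {poly 'F_2}) : Prop :=
  exists c : {poly 'F_2}, eqR n u (c * (1 + xneg n d)) /\ eqR n v (c * (1 + xneg n 1)).

Definition X_logical n d u v : Prop := inC1 n d u v /\ ~ inC2 n d u v.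
Definition Z_logical n d u v : Prop := inC1' n d u v /\ ~ inC2' n d u v.

(* a fault configuration (j = ancilla hook faults, u,v = data errors) under the
   RL pattern producing an undetectable logical error *)
Definition bad_fault (n d : nat) (j u v : {poly 'F_2}) : Prop :=
  X_logical n d (u + j * (1 + 'X)) v \/ Z_logical n d (u + j * (1 + xneg n d)) v.

Definition fault_cost (n : nat) (j u v : {poly 'F_2}) : nat :=
  (wt n j + wt n u + wt n v)%N.

Definition effective_distance_is (n d D : nat) : Prop :=
  (exists j u v, bad_fault n d j u v /\ fault_cost n j u v = D) /\
  (forall j u v, bad_fault n d j u v -> (D <= fault_cost n j u v)%N).

(* Main.v *)
Require Import Defs.
From mathcomp Require Import all_boot all_order all_algebra.
From mathcomp Require Import zify ring.
Set Implicit Arguments. Unset Strict Implicit. Unset Printing Implicit Defensive.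
Import GRing.Theory.
Local Open Scope ring_scope.

Lemma F2_cases (x : 'F_2) : x = 0 \/ x = 1.
Proof. case: x => [[|[|k]] Hk]; [left|right|by []]; exact: val_inj. Qed.
Lemma F2_add_self (x : 'F_2) : x + x = 0.
Proof. by case: (F2_cases x) => ->; apply/eqP. Qed.
Lemma F2_opp (x : 'F_2) : - x = x.
Proof. by case: (F2_cases x) => ->; apply/eqP. Qed.
Lemma F2_sub (x y : 'F_2) : x - y = x + y.
Proof. by rewrite F2_opp. Qed.

Definition cf (n : nat) (p : {poly 'F_2}) (i : nat) : 'F_2 :=
  (p %% modpoly n)`_(i %% n).

Section CF.
Variable n : nat.
Hypothesis n_gt0 : (0 < n)%N.

Lemma size_modpoly : size (modpoly n) = n.+1.
Proof. by rewrite /modpoly size_Xn_sub_1. Qed.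

Lemma modpoly_neq0 : modpoly n != 0.
Proof. by rewrite -size_poly_gt0 size_modpoly. Qed.

Lemma size_mod (p : {poly 'F_2}) : (size (p %% modpoly n)%R <= n)%N.
Proof. by have := ltn_modp p (modpoly n); rewrite modpoly_neq0 size_modpoly. Qed.

Lemma cfD (p q : {poly 'F_2}) i : cf n (p + q) i = cf n p i + cf n q i.
Proof. by rewrite /cf modpD coefD. Qed.

Lemma cf_eqR (p q : {poly 'F_2}) : eqR n p q -> forall i, cf n p i = cf n q i.
Proof.
move=> H i; rewrite /cf -(subrK q p) modpD (modp_eq0 H) add0r //.
Qed.

Lemma cf_mod (p : {poly 'F_2}) i : cf n p (i %% n) = cf n p i.
Proof. by rewrite /cf modn_mod. Qed.

Lemma cf_per (p : {poly 'F_2}) i k : cf n p (i + k * n) = cf n p i.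
Proof. by rewrite /cf addnC modnMDl. Qed.

Lemma coef_modpoly k : (modpoly n)`_k = (k == n)%:R - (k == 0)%:R.
Proof. by rewrite /modpoly coefB coefXn coef1. Qed.

Lemma cfX (p : {poly 'F_2}) i : cf n ('X * p) i.+1 = cf n p i.
Proof.
rewrite /cf; set r := p %% modpoly n.
set c := r`_n.-1.
have Hr := size_mod p; rewrite -/r in Hr.
have E : ('X * p) %% modpoly n = 'X * r - c%:P * modpoly n.
  rewrite -modp_mul -/r.
  rewrite {1}(_ : 'X * r = c%:P * modpoly n + ('X * r - c%:P * modpoly n));
    last by rewrite addrC subrK.
  rewrite modpD modp_mull add0r modp_small // size_modpoly ltnS.
  apply/leq_sizeP => j Hj.
  rewrite coefB coefXM coefCM coef_modpoly.
  case: (ltngtP j n) Hj => // [Hnj _|-> _].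
    have Hj0 : (0 < j)%N by apply: leq_ltn_trans Hnj.
    rewrite (gtn_eqF Hj0).
    have /leq_sizeP Hz : (size r <= j.-1)%N.
      by apply: (leq_trans Hr); lia.
    by rewrite Hz // subrr mulr0 subr0.
  by rewrite eqn0Ngt n_gt0 /= subr0 mulr1 -/c subrr.
rewrite E coefB coefXM coefCM coef_modpoly.
have Hi : (i %% n < n)%N by rewrite ltn_mod.
have Hmod : (i.+1 %% n = (i %% n).+1 %% n)%N by rewrite -addn1 -modnDml addn1.
rewrite Hmod.
case: (ltngtP (i %% n).+1 n) => [Hlt|Hgt|Heq].
- rewrite modn_small // /=.
  by rewrite (ltn_eqF Hlt) subrr mulr0 subr0.
- by move: Hgt; rewrite ltnS leqNgt Hi.
- have Hn1 : n.-1 = (i %% n)%N by rewrite -[in LHS]Heq.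
  rewrite Heq modnn /= (eq_sym 0%N n) (gtn_eqF n_gt0) /c Hn1.
  by rewrite !sub0r mulrN1 opprK.
Qed.

Lemma cfXn (p : {poly 'F_2}) k i : cf n ('X^k * p) (i + k) = cf n p i.
Proof.
elim: k i => [|k IH] i; first by rewrite expr0 mul1r addn0.
by rewrite exprS -mulrA addnS cfX IH.
Qed.

Lemma sum_widen_nat (G : nat -> nat) m :
  (m <= n)%N -> (forall j, (m <= j)%N -> G j = 0%N) ->
  (\sum_(i < m) G i = \sum_(i < n) G i)%N.
Proof.
move=> Hm HG; rewrite (big_ord_widen n G Hm) big_mkcond /=.
apply: eq_bigr => i _; case: ifP => // /negbT; rewrite -leqNgt => /HG ->//.
Qed.

Lemma sum_widen_F (G : nat -> 'F_2) m :
  (m <= n)%N -> (forall j, (m <= j)%N -> G j = 0) ->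
  \sum_(i < m) G i = \sum_(i < n) G i.
Proof.
move=> Hm HG; rewrite (big_ord_widen n G Hm) big_mkcond /=.
apply: eq_bigr => i _; case: ifP => // /negbT; rewrite -leqNgt => /HG ->//.
Qed.

Lemma wt_cf (p : {poly 'F_2}) : wt n p = (\sum_(i < n) nat_of_bool (cf n p i != 0%R))%N.
Proof.
rewrite /wt -sum1_count big_mkcond /= (big_nth 0%R) big_mkord.
rewrite (sum_widen_nat (G := fun i => nat_of_bool (nth 0%R (p %% modpoly n)%R i != 0%R)) (size_mod p)).
  apply: eq_bigr => i _; rewrite /cf modn_small //.
by move=> j Hj; rewrite nth_default // eqxx.
Qed.

Lemma horner1_cf (p : {poly 'F_2}) : p.[1] = \sum_(i < n) cf n p i.
Proof.
rewrite {1}(divp_eq p (modpoly n)) hornerD hornerM.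
have -> : (modpoly n).[1] = 0 by rewrite /modpoly hornerD hornerN hornerXn hornerC expr1n subrr.
rewrite mulr0 add0r horner_coef.
rewrite (sum_widen_F (G := fun i => (p %% modpoly n)`_i * 1 ^+ i) (size_mod p)).
  by apply: eq_bigr => i _; rewrite expr1n mulr1 /cf modn_small.
by move=> j Hj; rewrite nth_default // mul0r.
Qed.

End CF.

Lemma polyF2_opp (p : {poly 'F_2}) : - p = p.
Proof. by apply/polyP => i; rewrite coefN F2_opp. Qed.
Lemma polyF2_sub (p q : {poly 'F_2}) : p - q = p + q.
Proof. by rewrite polyF2_opp. Qed.

Lemma F2_natr_odd k : (k%:R : 'F_2) = (odd k)%:R.
Proof.
elim: k => // k IH; rewrite mulrS IH /=.
by case: (odd k) => /=; apply/eqP.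
Qed.

Lemma XsubE : ('X - 1%:P : {poly 'F_2}) = 1 + 'X.
Proof. by rewrite polyC1 polyF2_sub addrC. Qed.

Lemma key_div n (W : {poly 'F_2}) : odd n ->
  modpoly n %| W * (1 + 'X) -> W.[1] = 0 -> modpoly n %| W.
Proof.
move=> Hn HW H1.
have Hm : modpoly n = ('X - 1%:P) * \sum_(i < n) 'X^i by rewrite /modpoly polyC1 subrX1.
have HJ : (\sum_(i < n) 'X^i : {poly 'F_2}).[1] = 1.
  rewrite horner_sum (eq_bigr (fun _ => 1)); last by move=> i _; rewrite hornerXn expr1n.
  by rewrite sumr_const card_ord F2_natr_odd Hn.
have Hcop : coprimep ('X - 1%:P) (\sum_(i < n) 'X^i : {poly 'F_2}).
  rewrite coprimep_sym coprimep_XsubC /root HJ; by apply/eqP.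
rewrite Hm Gauss_dvdp //; apply/andP; split.
  by rewrite dvdp_XsubCl /root H1.
rewrite -(@dvdp_mul2r _ ('X - 1%:P)); last first.
  by rewrite -size_poly_gt0 size_XsubC.
by rewrite mulrC -Hm XsubE.
Qed.

Lemma eqR_refl n (p : {poly 'F_2}) : eqR n p p.
Proof. by rewrite /eqR subrr dvdp0. Qed.

Lemma X_par n d (U V : {poly 'F_2}) : odd n ->
  X_logical n d U V -> U.[1] != 0 \/ V.[1] != 0.
Proof.
move=> Hn [H1 H2].
case: (F2_cases U.[1]) => HU; last by left; rewrite HU.
case: (F2_cases V.[1]) => HV; last by right; rewrite HV.
exfalso; apply: H2.
have : ('X - 1%:P) %| U by rewrite dvdp_XsubCl /root HU.
case/dvdpP => c Hc; exists c; split.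
  by rewrite Hc XsubE; apply: eqR_refl.
rewrite /eqR polyF2_sub; apply: key_div => //.
  move: H1; rewrite /inC1 /eqR subr0 Hc XsubE.
  by rewrite (mulrC c) -mulrA (mulrC (1 + 'X)) -mulrDl addrC.
by rewrite hornerD hornerM HV add0r hornerD hornerC hornerXn expr1n F2_add_self mulr0.
Qed.

Lemma Z_par n d (U V : {poly 'F_2}) : odd n -> (0 < n)%N ->
  Z_logical n d U V -> U.[1] != 0 \/ V.[1] != 0.
Proof.
move=> Hn Hn0 [H1 H2].
case: (F2_cases U.[1]) => HU; last by left; rewrite HU.
case: (F2_cases V.[1]) => HV; last by right; rewrite HV.
exfalso; apply: H2.
have : ('X - 1%:P) %| V by rewrite dvdp_XsubCl /root HV.
case/dvdpP => c' Hc; rewrite XsubE in Hc.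
set c := 'X * c'.
have EX : ('X * 'X^(n.-1) : {poly 'F_2}) = 'X^n by rewrite -exprS prednK.
have EV : modpoly n %| V + c * (1 + xneg n 1).
  rewrite -polyF2_sub /xneg muln1.
  have -> : V - c * (1 + 'X^(n.-1)) = - (c' * ('X * 'X^(n.-1) - 1)) by rewrite Hc /c; ring.
  by rewrite polyF2_opp EX dvdp_mull // dvdpp.
exists c; split; last by rewrite /eqR polyF2_sub.
rewrite /eqR; apply: key_div => //; last first.
  by rewrite hornerD hornerN hornerM hornerD hornerC /xneg hornerXn expr1n HU F2_add_self mulr0 subr0.
have HW1 : modpoly n %| (U - c * (1 + xneg n d)) * (1 + xneg n 1).
  move: H1; rewrite /inC1' /eqR subr0 => H1.
  have -> : (U - c * (1 + xneg n d)) * (1 + xneg n 1) =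
     (U * (1 + xneg n 1) + V * (1 + xneg n d)) - (V + c * (1 + xneg n 1)) * (1 + xneg n d)
    by ring.
  by rewrite polyF2_sub; apply: dvdp_add => //; apply: dvdp_mulr.
have E1 : ((1 + 'X) : {poly 'F_2}) = 'X * (1 + xneg n 1) - modpoly n.
  by rewrite /xneg muln1 /modpoly -EX; ring.
rewrite E1 (polyF2_sub ('X * _)) mulrDr; apply: dvdp_add; last by apply: dvdp_mull; apply: dvdpp.
by rewrite mulrA (mulrC _ 'X) -mulrA; apply: dvdp_mull.
Qed.

Lemma sum_shift1 (R : Type) (idx : R) (op : Monoid.com_law idx) n (h : nat -> R) :
  h n = h 0%N ->
  \big[op/idx]_(m < n) h m.+1 = \big[op/idx]_(m < n) h m.
Proof.
case: n => [|n] Hh; first by rewrite !big_ord0.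
rewrite big_ord_recr big_ord_recl /= Hh Monoid.mulmC; congr (op _ _).
Qed.

Lemma sum_shift (R : Type) (idx : R) (op : Monoid.com_law idx) n (g : nat -> R) a :
  (forall i, g (i + n)%N = g i) ->
  \big[op/idx]_(m < n) g (m + a)%N = \big[op/idx]_(m < n) g m.
Proof.
move=> Hg; elim: a => [|a IH]; first by apply: eq_bigr => i _; rewrite addn0.
rewrite -IH -(sum_shift1 op (h := fun m => g (m + a)%N)); last by rewrite /= add0n addnC Hg.
by apply: eq_bigr => i _; rewrite addnS.
Qed.

Lemma F2_tel (g : nat -> 'F_2) q :
  \sum_(t < q) (g t.+1 + g t) = g q + g 0%N.
Proof.
elim: q => [|q IH]; first by rewrite big_ord0 F2_add_self.
rewrite big_ord_recr /= IH.
have := F2_add_self (g q); set z := g q + g q => Hz.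
by rewrite addrC -addrA (addrA (g q)) -/z Hz add0r.
Qed.

Lemma F2_eq (a b : 'F_2) : a + b = 0 -> a = b.
Proof. by move=> H; rewrite -[a]addr0 -(F2_add_self b) addrA H add0r. Qed.

Definition nz (x : 'F_2) : nat := (x != 0).

Lemma nzD (x y : 'F_2) : (nz (x + y)%R <= nz x + nz y)%N.
Proof. by case: (F2_cases x) => ->; case: (F2_cases y) => ->. Qed.

Lemma nz_sum (x : nat -> 'F_2) K : (nz (\sum_(k < K) x k)%R <= \sum_(k < K) nz (x k))%N.
Proof.
elim: K => [|K IH]; first by rewrite !big_ord0.
rewrite !big_ord_recr /=; apply: leq_trans (nzD _ _) _.
by rewrite leq_add2r.
Qed.

Definition per n (g : nat -> 'F_2) := forall i, g (i + n)%N = g i.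
Definition cnt n (g : nat -> 'F_2) : nat := (\sum_(i < n) nz (g i))%N.

Lemma mulrn_F2 (x : 'F_2) k : x *+ k = x *+ odd k.
Proof. by rewrite -mulr_natr F2_natr_odd mulr_natr. Qed.

Lemma par_choice (SU SV : 'F_2) s : SU != 0 \/ SV != 0 ->
  SU *+ s.+1 + SV *+ s != 0 \/ SU *+ s + SV *+ s.+1 != 0.
Proof.
rewrite !(mulrn_F2 _ s.+1) !(mulrn_F2 _ s) /=.
by case: (odd s); case: (F2_cases SU) => ->; case: (F2_cases SV) => -> /=; 
  rewrite ?mulr0n ?mulr1n ?addr0 ?add0r; (try by case); move=> _; [left|right|left|right|left|right].
Qed.

Lemma avg n (cU cV : nat -> 'F_2) (a b : nat -> nat) p q :
  odd n -> per n cU -> per n cV ->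
  (forall m, \sum_(k < p) cU (m + a k)%N + \sum_(t < q) cV (m + b t)%N =
             \sum_(k < p) cU (0 + a k)%N + \sum_(t < q) cV (0 + b t)%N) ->
  \sum_(k < p) cU (0 + a k)%N + \sum_(t < q) cV (0 + b t)%N =
  (\sum_(i < n) cU i) *+ p + (\sum_(i < n) cV i) *+ q.
Proof.
move=> Hn HU HV Hc.
set f0 := (X in X = _).
have E1 : \sum_(m < n) (\sum_(k < p) cU (m + a k)%N + \sum_(t < q) cV (m + b t)%N) = f0.
  rewrite (eq_bigr (fun _ => f0)); last by move=> m _; rewrite Hc.
  by rewrite sumr_const card_ord mulrn_F2 Hn.
rewrite -E1 big_split /=.
congr (_ + _); rewrite exchange_big /=.
  rewrite (eq_bigr (fun _ => \sum_(i < n) cU i)) ?sumr_const ?card_ord //.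
  by move=> k _; rewrite (sum_shift _ (g := cU)).
rewrite (eq_bigr (fun _ => \sum_(i < n) cV i)) ?sumr_const ?card_ord //.
by move=> k _; rewrite (sum_shift _ (g := cV)).
Qed.

Lemma nz_pos (x : 'F_2) : x != 0 -> (1 <= nz x)%N.
Proof. by rewrite /nz => ->. Qed.

Lemma count_core n (cu cv cj : nat -> 'F_2) (a b : nat -> nat) p q e1 e2 :
  per n cu -> per n cv -> per n cj ->
  (forall m, \sum_(k < p) cu (m + a k)%N + \sum_(t < q) cv (m + b t)%N
             + cj (m + e1)%N + cj (m + e2)%N != 0) ->
  (n <= p * cnt n cu + q * cnt n cv + 2 * cnt n cj)%N.
Proof.
move=> Hu Hv Hj Hm.
have H1 : forall m, (1 <= \sum_(k < p) nz (cu (m + a k)%N) + \sum_(t < q) nz (cv (m + b t)%N)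
             + nz (cj (m + e1)%N) + nz (cj (m + e2)%N))%N.
  move=> m; have h0 := nz_pos (Hm m); apply: (leq_trans h0).
  apply: (leq_trans (nzD _ _)); rewrite leq_add2r.
  apply: (leq_trans (nzD _ _)); rewrite leq_add2r.
  apply: (leq_trans (nzD _ _)).
  exact: leq_add (nz_sum (fun k => cu (m + a k)%N) p) (nz_sum (fun t => cv (m + b t)%N) q).
apply: (@leq_trans (\sum_(m < n) 1)%N); first by rewrite sum1_card card_ord.
have Hs : (\sum_(m < n) 1 <= \sum_(m < n) (\sum_(k < p) nz (cu (m + a k)%N) + \sum_(t < q) nz (cv (m + b t)%N)
             + nz (cj (m + e1)%N) + nz (cj (m + e2)%N)))%N.
  by apply: leq_sum => m _; exact: H1.
apply: (leq_trans Hs).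
rewrite !big_split /= mul2n -addnn.
have Es : forall (g : nat -> 'F_2) (c : nat -> nat) K, per n g ->
    (\sum_(m < n) \sum_(k < K) nz (g (m + c k)%N) = K * cnt n g)%N.
  move=> g c K Hg; rewrite exchange_big /=.
  rewrite (eq_bigr (fun _ => cnt n g)).
    by rewrite sum_nat_const card_ord.
  move=> k _; rewrite /cnt (sum_shift _ (g := fun i => nz (g i))) //.
  by move=> i; rewrite /= Hg.
have Es1 : forall (g : nat -> 'F_2) e, per n g ->
    (\sum_(m < n) nz (g (m + e)%N) = cnt n g)%N.
  move=> g e Hg; rewrite /cnt (sum_shift _ (g := fun i => nz (g i))) //.
  by move=> i; rewrite /= Hg.
rewrite (Es cu a p Hu) (Es cv b q Hv) (Es1 cj e1 Hj) (Es1 cj e2 Hj); lia.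
Qed.

Lemma F2_rel (a b c e : 'F_2) : a + b + c + e = 0 -> c + e = a + b.
Proof. by move=> H; apply: F2_eq; rewrite -H; ring. Qed.

Lemma tel2 (g h1 h0 : nat -> 'F_2) K :
  (forall k, h1 k + h0 k = g k.+1 + g k) ->
  \sum_(k < K) h1 k + \sum_(k < K) h0 k = g K + g 0%N.
Proof.
move=> H; rewrite -big_split /= -F2_tel; apply: eq_bigr => k _; exact: H.
Qed.

Lemma per_add n (g : nat -> 'F_2) i K : per n g -> g (i + K * n)%N = g i.
Proof.
move=> Hg; elim: K => [|K IH]; first by rewrite mul0n addn0.
by rewrite mulSn addnCA addnC Hg IH.
Qed.

Lemma final_arith n s d u v j :
  d = s.*2.+1 -> n = (s + 1 + s * d)%N -> (1 <= s)%N ->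
  (exists p q, [/\ (p <= s.+1)%N, (q <= s.+1)%N & (n <= p * u + q * v + 2 * j)%N]) ->
  (d <= u + v + j)%N.
Proof.
move=> Hd Hn Hs [p [q [Hp Hq H]]].
have H2 : (n <= s.+1 * (u + v + j))%N.
  apply: (leq_trans H); rewrite !mulnDr.
  apply: leq_add; [apply: leq_add|]; apply: leq_mul => //.
rewrite leqNgt; apply/negP => HT.
have H3 : (s.+1 * (u + v + j) <= s.+1 * s.*2)%N.
  by rewrite leq_mul2l /=; rewrite Hd in HT; lia.
rewrite Hn Hd in H2; nia.
Qed.

Lemma X_core n s d (cu cv cj cU : nat -> 'F_2) :
  d = s.*2.+1 -> n = (s + 1 + s * d)%N -> (1 <= s)%N ->
  per n cu -> per n cv -> per n cj -> per n cU ->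
  (forall i, cU i.+1 = cu i.+1 + cj i.+1 + cj i) ->
  (forall i, cU (i + d + 1)%N + cU (i + 1)%N + cv (i + d + 1)%N + cv (i + d)%N = 0) ->
  (\sum_(i < n) cU i != 0 \/ \sum_(i < n) cv i != 0) ->
  (d <= cnt n cu + cnt n cv + cnt n cj)%N.
Proof.
move=> Hd Hn Hs Pu Pv Pj PU HU Hrel Hpar.
have Hodd : odd n.
  have -> : n = (s * s + s).*2.+1 by rewrite Hn Hd; lia.
  by rewrite /= odd_double.
have Hnd : (s.+1 * d = s + n)%N by rewrite Hn Hd; lia.
set f1 := fun m => \sum_(k < s.+1) cU (m + k)%N + \sum_(t < s) cv (m + (s + d + t * d))%N.
have Inv1 : forall m, f1 m.+1 = f1 m.
  move=> m; apply: F2_eq; rewrite /f1 addrACA.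
  rewrite (@tel2 (fun k => cU (m + k)%N) (fun k => cU (m.+1 + k)%N) (fun k => cU (m + k)%N)); last by move=> k; rewrite addSnnS.
  rewrite (@tel2 (fun t => cU (m + s.+1 + t * d)%N) (fun t => cv (m.+1 + (s + d + t * d))%N) (fun t => cv (m + (s + d + t * d))%N)); last first.
    move=> t; have := Hrel (m + s + t * d)%N; move/F2_rel.
    rewrite (_ : (m.+1 + (s + d + t * d) = m + s + t * d + d + 1)%N); last lia.
    rewrite (_ : (m + (s + d + t * d) = m + s + t * d + d)%N); last lia.
    rewrite (_ : (m + s.+1 + t.+1 * d = m + s + t * d + d + 1)%N); last by rewrite mulSn; lia.
    by rewrite (_ : (m + s.+1 + t * d = m + s + t * d + 1)%N); last lia.
  rewrite addn0 mul0n addn0.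
  have -> : (m + s.+1 + s * d = m + n)%N by rewrite Hn; lia.
  by rewrite PU (addrC (cU m)) F2_add_self.
set f2 := fun m => \sum_(k < s) cU (m + k.+1)%N + \sum_(t < s.+1) cv (m + (d + t * d))%N.
have Inv2 : forall m, f2 m.+1 = f2 m.
  move=> m; apply: F2_eq; rewrite /f2 addrACA.
  rewrite (@tel2 (fun k => cU (m + k.+1)%N) (fun k => cU (m.+1 + k.+1)%N) (fun k => cU (m + k.+1)%N)); last by move=> k; rewrite addSnnS.
  rewrite (@tel2 (fun t => cU (m.+1 + t * d)%N) (fun t => cv (m.+1 + (d + t * d))%N) (fun t => cv (m + (d + t * d))%N)); last first.
    move=> t; have := Hrel (m + t * d)%N; move/F2_rel.
    rewrite (_ : (m.+1 + (d + t * d) = m + t * d + d + 1)%N); last lia.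
    rewrite (_ : (m + (d + t * d) = m + t * d + d)%N); last lia.
    by rewrite (_ : (m.+1 + t * d = m + t * d + 1)%N); last lia.
  rewrite mul0n addn0 Hnd addnA PU addSnnS addn1.
  by rewrite F2_add_self.
have C1 : forall m, f1 m = f1 0%N by elim=> // m IH; rewrite Inv1 IH.
have C2 : forall m, f2 m = f2 0%N by elim=> // m IH; rewrite Inv2 IH.
have A1 := @avg n cU cv (fun k => k) (fun t => (s + d + t * d)%N) s.+1 s Hodd PU Pv C1.
have A2 := @avg n cU cv (fun k => k.+1) (fun t => (d + t * d)%N) s s.+1 Hodd PU Pv C2.
apply: (final_arith Hd Hn Hs).
case: (par_choice s Hpar) => [Hf|Hf].
- exists s.+1, s; split; rewrite ?leqnSn //.
  apply: (@count_core n cu cv cj (fun k => k.+1) (fun t => (s.+1 + d + t * d)%N) s.+1 s s.+1 0 Pu Pv Pj).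
  move=> m; have := Hf; rewrite -[X in X != 0 -> _]A1 -/(f1 0%N) -(C1 m.+1) /f1.
  have E : \sum_(k < s.+1) cU (m.+1 + k)%N =
      \sum_(k < s.+1) cu (m + k.+1)%N + (cj (m + s.+1)%N + cj (m + 0)%N).
    rewrite -(F2_tel (fun k => cj (m + k)%N)) -big_split /=.
    by apply: eq_bigr => k _; rewrite addSnnS addnS HU -addnS addrA.
  rewrite E (eq_bigr (fun t : 'I_s => cv (m + (s.+1 + d + t * d))%N)); last first.
    by move=> t _; congr cv; lia.
  by congr (_ != 0); ring.
- exists s, s.+1; split; rewrite ?leqnSn //.
  apply: (@count_core n cu cv cj (fun k => k.+2) (fun t => (d.+1 + t * d)%N) s s.+1 s.+1 1 Pu Pv Pj).
  move=> m; have := Hf; rewrite -[X in X != 0 -> _]A2 -/(f2 0%N) -(C2 m.+1) /f2.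
  have E : \sum_(k < s) cU (m.+1 + k.+1)%N =
      \sum_(k < s) cu (m + k.+2)%N + (cj (m + s.+1)%N + cj (m + 1)%N).
    rewrite -(F2_tel (fun k => cj (m + k.+1)%N)) -big_split /=.
    by apply: eq_bigr => k _; rewrite addSnnS addnS HU -addnS addrA.
  rewrite E (eq_bigr (fun t : 'I_s.+1 => cv (m + (d.+1 + t * d))%N)); last first.
    by move=> t _; congr cv; lia.
  by congr (_ != 0); ring.
Qed.

Lemma Z_core n s d (cu cv cj cU : nat -> 'F_2) :
  d = s.*2.+1 -> n = (s + 1 + s * d)%N -> (1 <= s)%N ->
  per n cu -> per n cv -> per n cj -> per n cU ->
  (forall i, cU i = cu i + cj i + cj (i + d)%N) ->
  (forall i, cU i + cU (i + 1)%N + cv i + cv (i + d)%N = 0) ->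
  (\sum_(i < n) cU i != 0 \/ \sum_(i < n) cv i != 0) ->
  (d <= cnt n cu + cnt n cv + cnt n cj)%N.
Proof.
move=> Hd Hn Hs Pu Pv Pj PU HU Hrel Hpar.
have Hodd : odd n.
  have -> : n = (s * s + s).*2.+1 by rewrite Hn Hd; lia.
  by rewrite /= odd_double.
have Hnd : (s.+1 * d = s + n)%N by rewrite Hn Hd; lia.
case: s Hs Hd Hn Hnd Hpar => [//|s'] _ Hd Hn Hnd Hpar.
set s := s'.+1.
have Hinv : (1 + s'.*2.+1 * n = (s * s).*2 * d)%N by rewrite Hn Hd /s; nia.
have Const : forall g : nat -> 'F_2, per n g -> (forall m, g (m + d)%N = g m) ->
    forall m, g m = g 0%N.
  move=> g Pg Ig.
  have Ik : forall k m, g (m + k * d)%N = g m.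
    by elim=> [|k IH] m; rewrite ?mul0n ?addn0 // mulSn addnCA addnC Ig IH.
  elim=> // m IH; rewrite -IH -(per_add _ (s'.*2.+1) Pg) -[m.+1]addn1 -addnA Hinv.
  by rewrite Ik.
set g1 := fun m => \sum_(k < s.+1) cU (m + k * d)%N + \sum_(t < s) cv (m + t)%N.
have Inv1 : forall m, g1 (m + d)%N = g1 m.
  move=> m; apply: F2_eq; rewrite /g1 addrACA.
  rewrite (@tel2 (fun k => cU (m + k * d)%N) (fun k => cU (m + d + k * d)%N) (fun k => cU (m + k * d)%N)); last by move=> k; rewrite mulSn addnA.
  rewrite (@tel2 (fun t => cU (m + t)%N) (fun t => cv (m + d + t)%N) (fun t => cv (m + t)%N)); last first.
    move=> t; have H := Hrel (m + t)%N; apply: F2_eq; rewrite -H.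
    rewrite (_ : (m + d + t = m + t + d)%N); last lia.
    rewrite (_ : (m + t.+1 = m + t + 1)%N); last lia.
    ring.
  rewrite Hnd addnA PU mul0n !addn0.
  by rewrite (addrC (cU (m + s)%N)) F2_add_self.
set g2 := fun m => \sum_(k < s) cU (m + k * d)%N + \sum_(t < s.+1) cv (m + (s * d + t))%N.
have Inv2 : forall m, g2 (m + d)%N = g2 m.
  move=> m; apply: F2_eq; rewrite /g2 addrACA.
  rewrite (@tel2 (fun k => cU (m + k * d)%N) (fun k => cU (m + d + k * d)%N) (fun k => cU (m + k * d)%N)); last by move=> k; rewrite mulSn addnA.
  rewrite (@tel2 (fun t => cU (m + (s * d + t))%N) (fun t => cv (m + d + (s * d + t))%N) (fun t => cv (m + (s * d + t))%N)); last first.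
    move=> t; have H := Hrel (m + (s * d + t))%N; apply: F2_eq; rewrite -H.
    rewrite (_ : (m + d + (s * d + t) = m + (s * d + t) + d)%N); last lia.
    rewrite (_ : (m + (s * d + t.+1) = m + (s * d + t) + 1)%N); last lia.
    ring.
  rewrite (_ : (s * d + s.+1 = n)%N); last by rewrite Hn /s; lia.
  rewrite PU mul0n !addn0.
  by rewrite (addrC (cU (m + s * d)%N)) F2_add_self.
have P1' : per n g1.
  move=> i; rewrite /g1 /=; congr (_ + _); apply: eq_bigr => k _; by rewrite addnAC ?PU ?Pv.
have P2' : per n g2.
  move=> i; rewrite /g2 /=; congr (_ + _); apply: eq_bigr => k _; by rewrite addnAC ?PU ?Pv.
have C1 := Const g1 P1' Inv1.
have C2 := Const g2 P2' Inv2.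
have A1 := @avg n cU cv (fun k => k * d)%N (fun t => t) s.+1 s Hodd PU Pv C1.
have A2 := @avg n cU cv (fun k => k * d)%N (fun t => (s * d + t)%N) s s.+1 Hodd PU Pv C2.
apply: (final_arith Hd Hn (ltn0Sn s')).
case: (par_choice s Hpar) => [Hf|Hf].
- exists s.+1, s; split; rewrite ?leqnSn //.
  apply: (@count_core n cu cv cj (fun k => k * d)%N (fun t => t) s.+1 s (s.+1 * d) (0 * d) Pu Pv Pj).
  move=> m; have := Hf; rewrite -[X in X != 0 -> _]A1 -/(g1 0%N) -(C1 m) /g1.
  have E : \sum_(k < s.+1) cU (m + k * d)%N =
      \sum_(k < s.+1) cu (m + k * d)%N + (cj (m + s.+1 * d)%N + cj (m + 0 * d)%N).
    rewrite -(F2_tel (fun k => cj (m + k * d)%N)) -big_split /=.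
    by apply: eq_bigr => k _; rewrite HU -addrA (addrC (cj (m + k * d)%N)) mulSn (addnC d) addnA.
  by rewrite E; congr (_ != 0); ring.
- exists s, s.+1; split; rewrite ?leqnSn //.
  apply: (@count_core n cu cv cj (fun k => k * d)%N (fun t => (s * d + t)%N) s s.+1 (s * d) (0 * d) Pu Pv Pj).
  move=> m; have := Hf; rewrite -[X in X != 0 -> _]A2 -/(g2 0%N) -(C2 m) /g2.
  have E : \sum_(k < s) cU (m + k * d)%N =
      \sum_(k < s) cu (m + k * d)%N + (cj (m + s * d)%N + cj (m + 0 * d)%N).
    rewrite -(F2_tel (fun k => cj (m + k * d)%N)) -big_split /=.
    by apply: eq_bigr => k _; rewrite HU -addrA (addrC (cj (m + k * d)%N)) mulSn (addnC d) addnA.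
  by rewrite E; congr (_ != 0); ring.
Qed.

Lemma cf0 n i : cf n 0 i = 0.
Proof. by rewrite /cf mod0p coef0. Qed.

Lemma cf_sum n (F : nat -> {poly 'F_2}) K i :
  cf n (\sum_(k < K) F k) i = \sum_(k < K) cf n (F k) i.
Proof.
elim: K => [|K IH]; first by rewrite !big_ord0 cf0.
by rewrite !big_ord_recr /= cfD IH.
Qed.

Lemma cfXn_small n m i : (m < n)%N -> cf n 'X^m i = ((i %% n)%N == m)%:R.
Proof.
move=> Hm; rewrite /cf modp_small ?coefXn //.
by rewrite size_polyXn size_modpoly // (leq_ltn_trans (leq0n _) Hm).
Qed.

Lemma cf_xneg n k (p : {poly 'F_2}) i : (0 < n)%N ->
  cf n (xneg n k * p) i = cf n p (i + k)%N.
Proof.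
move=> Hn; rewrite /xneg -(cf_per _ _ i k).
rewrite (_ : (i + k * n = i + k + n.-1 * k)%N); last first.
  by case: n Hn => // n' _ /=; rewrite mulnS; lia.
exact: cfXn.
Qed.

Lemma wt_addX n (p : {poly 'F_2}) m : (0 < n)%N -> (m < n)%N -> cf n p m = 0 ->
  wt n (p + 'X^m) = (wt n p).+1.
Proof.
move=> Hn Hm Hp; rewrite !wt_cf //.
rewrite [in LHS](bigD1 (Ordinal Hm)) //= [in RHS](bigD1 (Ordinal Hm)) //= cfD Hp cfXn_small // modn_small //.
rewrite eqxx add0r /= add1n; congr (_.+1).
apply: eq_bigr => i Hi; rewrite cfD cfXn_small // modn_small //.
have -> : ((i : nat) == m) = false.
  by apply/negbTE; move: Hi; apply: contra => /eqP Him; apply/eqP; apply: val_inj.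
by rewrite addr0.
Qed.

Lemma wt_sumX n (a : nat -> nat) K : (0 < n)%N ->
  (forall k, (k < K)%N -> (a k < n)%N) ->
  (forall k l, (k < K)%N -> (l < K)%N -> a k = a l -> k = l) ->
  wt n (\sum_(k < K) 'X^(a k)) = K.
Proof.
move=> Hn; elim: K => [|K IH] Ha Hinj.
  by rewrite big_ord0 wt_cf // big1 // => i _; rewrite cf0.
have HaK : (a K < n)%N by apply: Ha.
rewrite big_ord_recr /= wt_addX //.
  rewrite IH // => [k Hk|k l Hk Hl]; first by apply: Ha; apply: ltnW.
  by apply: Hinj; apply: ltnW.
rewrite (cf_sum n (fun k => 'X^(a k))) big1 // => k _.
have Hk : (a k < n)%N by apply: Ha; apply: (ltn_trans (ltn_ord k)).
rewrite cfXn_small // modn_small //.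
case: eqP => // H.
have := Hinj _ _ (ltnSn K) (ltn_trans (ltn_ord k) (ltnSn K)) H.
by move=> HK; have := ltn_ord k; rewrite -HK ltnn.
Qed.

Lemma eqR_horner n (p q : {poly 'F_2}) : eqR n p q -> p.[1] = q.[1].
Proof.
case/dvdpP => r Hr; apply/eqP; rewrite -subr_eq0 -hornerN -hornerD Hr hornerM.
by rewrite /modpoly hornerD hornerN hornerXn hornerC expr1n subrr mulr0.
Qed.

Lemma per_cf n (p : {poly 'F_2}) : per n (cf n p).
Proof. by move=> i; have := cf_per n p i 1; rewrite mul1n. Qed.

Lemma wt0 n : wt n 0 = 0%N.
Proof. by rewrite /wt mod0p polyseq0. Qed.

Lemma polyF2_dbl (p : {poly 'F_2}) : p + p = 0.
Proof. by rewrite -[X in _ + X](polyF2_opp p) subrr. Qed.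

Lemma lower_bound n s d (j u v : {poly 'F_2}) :
  d = s.*2.+1 -> n = (s + 1 + s * d)%N -> (1 <= s)%N ->
  bad_fault n d j u v -> (d <= fault_cost n j u v)%N.
Proof.
move=> Hd Hn Hs.
have Hn0 : (0 < n)%N by rewrite Hn; lia.
have Hodd : odd n.
  have -> : n = (s * s + s).*2.+1 by rewrite Hn Hd; lia.
  by rewrite /= odd_double.
rewrite /fault_cost !wt_cf // => [[HX|HZ]].
- set U := u + j * (1 + 'X) in HX.
  have := @X_core n s d (cf n u) (cf n v) (cf n j) (cf n U) Hd Hn Hs
    (per_cf _ _) (per_cf _ _) (per_cf _ _) (per_cf _ _).
  rewrite /cnt /nz => H; suff: (d <= \sum_(i < n) (cf n u i != 0%R) + \sum_(i < n) (cf n v i != 0%R)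
        + \sum_(i < n) (cf n j i != 0%R))%N by lia.
  apply: H.
  + move=> i; rewrite /U mulrDr mulr1 (mulrC j 'X) !cfD cfX // addrA //.
  + clearbody U; move=> i; case: HX => HX1 _.
    have E := cf_eqR HX1 (i + 1 + d)%N.
    rewrite cf0 !mulrDr !mulr1 !cfD (mulrC U) (mulrC v) cfXn // in E.
    rewrite (_ : (i + 1 + d = (i + d).+1)%N) in E; last lia.
    rewrite cfX // in E.
    rewrite (_ : (i + d + 1 = (i + d).+1)%N); last lia.
    by rewrite -E; ring.
  + by rewrite -!(horner1_cf Hn0); exact: X_par Hodd HX.
- set U := u + j * (1 + xneg n d) in HZ.
  have := @Z_core n s d (cf n u) (cf n v) (cf n j) (cf n U) Hd Hn Hs
    (per_cf _ _) (per_cf _ _) (per_cf _ _) (per_cf _ _).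
  rewrite /cnt /nz => H; suff: (d <= \sum_(i < n) (cf n u i != 0%R) + \sum_(i < n) (cf n v i != 0%R)
        + \sum_(i < n) (cf n j i != 0%R))%N by lia.
  apply: H.
  + move=> i; rewrite /U mulrDr mulr1 (mulrC j) !cfD cf_xneg // addrA //.
  + clearbody U; move=> i; case: HZ => HZ1 _.
    have E := cf_eqR HZ1 i.
    rewrite cf0 !mulrDr !mulr1 !cfD (mulrC U) (mulrC v) !cf_xneg // in E.
    by rewrite -E; ring.
  + by rewrite -!(horner1_cf Hn0); exact: Z_par Hodd Hn0 HZ.
Qed.

Lemma upper_bound n s d :
  d = s.*2.+1 -> n = (s + 1 + s * d)%N -> (1 <= s)%N ->
  exists j u v, bad_fault n d j u v /\ fault_cost n j u v = d.
Proof.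
move=> Hd Hn Hs.
have Hn0 : (0 < n)%N by rewrite Hn; lia.
set u : {poly 'F_2} := \sum_(k < s.+1) 'X^(d * k).
set v : {poly 'F_2} := \sum_(k < s) 'X^k.
exists 0, u, v; split.
  left; rewrite mul0r addr0; split.
    rewrite /inC1 /eqR subr0.
    have Eu : u * (1 + 'X^d) = ('X^d) ^+ s.+1 - 1.
      rewrite subrX1 mulrC polyF2_sub addrC /u; congr (_ * _).
      by apply: eq_bigr => k _; rewrite exprM.
    have Ev : v * (1 + 'X) = 'X^s - 1.
      by rewrite subrX1 mulrC polyF2_sub addrC /v.
    rewrite Eu Ev -exprM (_ : (d * s.+1 = s + n)%N); last by rewrite Hn Hd; lia.
    rewrite exprD.
    have -> : 'X^s * 'X^n - 1 + ('X^s - 1) =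
        'X^s * modpoly n + (('X^s - 1) + ('X^s - 1)) :> {poly 'F_2}
      by rewrite /modpoly; ring.
    by rewrite polyF2_dbl addr0 dvdp_mull.
  case=> c [H1 H2].
  have := eqR_horner H1; have := eqR_horner H2.
  rewrite !hornerM !hornerD !hornerC hornerX hornerXn expr1n !F2_add_self !mulr0.
  rewrite /u /v !horner_sum.
  move=> Hv Hu.
  rewrite (eq_bigr (fun _ => 1)) in Hv; last by move=> k _; rewrite hornerXn expr1n.
  rewrite (eq_bigr (fun _ => 1)) in Hu; last by move=> k _; rewrite hornerXn expr1n.
  rewrite !sumr_const !card_ord in Hu Hv.
  rewrite F2_natr_odd in Hu; rewrite F2_natr_odd in Hv.
  move: Hu Hv; rewrite /=; case: (odd s) => /= H1' H2'.
    by move: H2' => /eqP.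
  by move: H1' => /eqP.
rewrite /fault_cost wt0 add0n.
rewrite (@wt_sumX n (fun k => d * k)%N s.+1 Hn0); last first.
- move=> k l _ _ H; have := eqn_mul2l d k l; rewrite H eqxx.
  by move/esym/orP => [/eqP Hd0|/eqP //]; lia.
- by move=> k Hk; rewrite Hn Hd; nia.
rewrite (@wt_sumX n (fun k => k) s Hn0) //; last by move=> k Hk; lia.
by rewrite Hd; lia.
Qed.

Lemma main_helper d : odd d -> (3 <= d)%N ->
  effective_distance_is ((d ^ 2 + 1)./2)%N d d.
Proof.
move=> Hodd H3.
set s := d./2.
have Hd : d = s.*2.+1.
  by have := odd_double_half d; rewrite Hodd /s add1n.
have Hs : (1 <= s)%N by move: H3; rewrite Hd; lia.
have Hn : ((d ^ 2 + 1)./2 = s + 1 + s * d)%N.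
  have -> : (d ^ 2 + 1 = (s + 1 + s * d).*2)%N.
    by rewrite (_ : (d ^ 2 = d * d)%N) // Hd; lia.
  by rewrite doubleK.
rewrite Hn; split.
  exact: upper_bound Hd erefl Hs.
by move=> j u v; apply: lower_bound Hd erefl Hs.
Qed.

Local Close Scope ring_scope.

Theorem theorem7 (d : nat) :
  odd d -> (3 <= d)%N ->
  effective_distance_is ((d ^ 2 + 1)./2) d d.
Proof. exact: main_helper. Qed.
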